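(* Let $T$, $\mathcal{S}=\mathcal{S}_+\cup\mathcal{S}_-$, $\lambda,\mu$, $P_\lambda,P_\mu$ be as in the context, and let $\{(Y_n,\kappa_n)\}_{n\ge0}$ be the discrete-time QBD with transition blocks $$C'_{-1}=\frac12\begin{bmatrix}0&P_{\mu+-}\\0&P_{\mu--}\end{bmatrix},\quad C'_0=\frac12\begin{bmatrix}P_{\mu++}&P_{\lambda+-}\\P_{\mu-+}&P_{\lambda--}\end{bmatrix},\quad C'_1=\frac12\begin{bmatrix}P_{\lambda++}&0\\P_{\lambda-+}&0\end{bmatrix},$$ started from $Y_0=1$, $\kappa_0\in\mathcal{S}_+$. Define $\tau_0:=0$ and $\tau_{k+1}:=\min\{n>\tau_k: Y_n\neq Y_{\tau_k}\}$, and set $M_{\tau_k}:=Y_{\tau_k}-1/2$ if $\kappa_{\tau_k}\in\mathcal{S}_+$ and $M_{\tau_k}:=Y_{\tau_k}+1/2$ if $\kappa_{\tau_k}\in\mathcal{S}_-$. Then $\{(M_{\tau_k},\kappa_{\tau_k})\}_{k\in\mathbb{N}}$ is a quasi-birth-death process on $(\mathbb{Z}+1/2)\times\mathcal{S}$ with transition blocks $$D_{-1}=\begin{bmatrix}0&0\\0&F\end{bmatrix},\quad D_0=\begin{bmatrix}0&G\\H&0\end{bmatrix},\quad D_1=\begin{bmatrix}E&0\\0&0\end{bmatrix},$$ where $E\in\mathbb{R}^{|\mathcal{S}_+|\times|\mathcal{S}_+|}$, $F\in\mathbb{R}^{|\mathcal{S}_-|\times|\mathcal{S}_-|}$, $G\in\mathbb{R}^{|\mathcal{S}_+|\times|\mathcal{S}_-|}$,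 $H\in\mathbb{R}^{|\mathcal{S}_-|\times|\mathcal{S}_+|}$ are given by $$\begin{bmatrix}E&G\\H&F\end{bmatrix}=\Big(I-\tfrac12\begin{bmatrix}P_{\mu++}&P_{\lambda+-}\\P_{\mu-+}&P_{\lambda--}\end{bmatrix}\Big)^{-1}\tfrac12\begin{bmatrix}P_{\lambda++}&P_{\mu+-}\\P_{\lambda-+}&P_{\mu--}\end{bmatrix} =\begin{bmatrix}I-\mu^{-1}T_{++}&-\lambda^{-1}T_{+-}\\-\mu^{-1}T_{-+}&I-\lambda^{-1}T_{--}\end{bmatrix}^{-1}\begin{bmatrix}I+\lambda^{-1}T_{++}&\mu^{-1}T_{+-}\\\lambda^{-1}T_{-+}&I+\mu^{-1}T_{--}\end{bmatrix}.$$
   Context: $T$ is the generator of a continuous-time Markov chain on a finite set $\mathcal{S}=\mathcal{S}_+\cup\mathcal{S}_-$ (disjoint, both nonempty), partitioned into blocks $T_{++},T_{+-},T_{-+},T_{--}$ according to $\mathcal{S}_\pm$. $\lambda,\mu>0$ satisfy $\lambda,\mu\ge\max_i|T_{ii}|$; $P_\lambda:=I+\lambda^{-1}T$, $P_\mu:=I+\mu^{-1}T$ with blocks $P_{\lambda++}$ etc. A discrete-time quasi-birth-death process (QBD) with transition blocks $L_{-1},L_0,L_1$ is a Markov chain $\{(Y_n,\kappa_n)\}$ on $\mathbb{Z}\times\mathcal{S}$ with $\mathbb{P}[Y_n=k+d,\kappa_n=j\mid Y_{n-1}=k,\kappa_{n-1}=i]=(L_d)_{ij}$ for $d\in\{-1,0,1\}$;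 for a QBD on $(\mathbb{Z}+1/2)\times\mathcal{S}$ the levels are shifted by $1/2$ in the same way. Matrices are partitioned into blocks according to $\mathcal{S}_+,\mathcal{S}_-$. *)

(* Defs.v *)
From HB Require Import structures.
From mathcomp Require Import all_boot all_order all_algebra.
From mathcomp Require Import all_classical all_reals all_analysis.
Set Implicit Arguments. Unset Strict Implicit. Unset Printing Implicit Defensive.
Import Order.TTheory GRing.Theory Num.Theory.
Local Open Scope ring_scope.

Section QBD.
Variable R : realType.
Variable n : nat.

Definition is_generator (T : 'M[R]_n) : Prop :=
  (forall i j : 'I_n, i != j -> 0 <= T i j) /\
  (forall i : 'I_n, \sum_(j < n) T i j = 0).

Definition Pmat (lam : R) (T : 'M[R]_n) : 'M[R]_n := 1%:M + lam^-1 *: T.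

(* One-step transition probability of a QBD with blocks Lm (= L_{-1}),
   L0, Lp (= L_1), from (level x, phase i) to (level x', phase j).
   Levels are real numbers (covering both Z and Z + 1/2). *)
Definition qbd_tr (Lm L0 Lp : 'M[R]_n) (x : R) (i : 'I_n) (x' : R) (j : 'I_n) : R :=
  if x' == x + 1 then Lp i j
  else if x' == x then L0 i j
  else if x' == x - 1 then Lm i j
  else 0.

(* A finite path of N steps of a QBD on Z x S started from (y0, i0) is encoded
   by w : {ffun 'I_N -> 'I_3 * 'I_n}: step t has level increment
   (w t).1 - 1 in {-1,0,1} and new phase (w t).2. *)
Definition path_level (N : nat) (y0 : int) (w : {ffun 'I_N -> 'I_3 * 'I_n}) (t : nat) : int :=
  y0 + \sum_(s < N | (s < t)%N) ((nat_of_ord (w s).1)%:Z - 1).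

Definition path_phase (N : nat) (i0 : 'I_n) (w : {ffun 'I_N -> 'I_3 * 'I_n}) (t : nat) : 'I_n :=
  match t with
  | 0 => i0
  | t'.+1 => match @insub nat (fun k => (k < N)%N) 'I_N t' with
             | Some s => (w s).2
             | None => i0
             end
  end.

Definition path_prob (Lm L0 Lp : 'M[R]_n) (N : nat) (y0 : int) (i0 : 'I_n)
    (w : {ffun 'I_N -> 'I_3 * 'I_n}) : R :=
  \prod_(t < N) qbd_tr Lm L0 Lp (path_level y0 w t)%:~R (path_phase i0 w t)
                             (path_level y0 w t.+1)%:~R (path_phase i0 w t.+1).

Fixpoint is_tau (y : nat -> int) (k : nat) (m : nat) : bool :=
  match k with
  | 0 => m == 0%N
  | k'.+1 => [exists p : 'I_m, is_tau y k' p && (y m != y p) &&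
              [forall t : 'I_m, (p < t)%N ==> (y t == y p)]]
  end.

Definition Mval (Splus : {set 'I_n}) (y : int) (i : 'I_n) : R :=
  if i \in Splus then y%:~R - 2^-1 else y%:~R + 2^-1.

End QBD.

(* Main.v *)
Require Import Defs.
From HB Require Import structures.
From mathcomp Require Import all_boot all_order all_algebra.
From mathcomp Require Import all_classical all_reals all_analysis.
From mathcomp Require Import ring lra.
Import Order.TTheory GRing.Theory Num.Theory.
Local Open Scope ring_scope.

Module Aux.
Import numFieldNormedType.Exports.
Set Implicit Arguments. Unset Strict Implicit. Unset Printing Implicit Defensive.


Section Cnt.
Variable y : nat -> int.

Fixpoint cnt t : nat := if t is t'.+1 then (cnt t' + (y t'.+1 != y t'))%N else 0%N.
Definition isch t : bool := if t is t'.+1 then y t'.+1 != y t' else true.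

Lemma cnt_mono s t : (s <= t)%N -> (cnt s <= cnt t)%N.
Proof.
elim: t => [|t IH]; first by rewrite leqn0 => /eqP ->.
rewrite leq_eqVlt => /orP [/eqP -> //|]; rewrite ltnS => /IH h.
by rewrite /= (leq_trans h) // leq_addr.
Qed.

Lemma const_cnt p d : (forall s, (p <= s <= p + d)%N -> y s = y p) ->
  cnt (p + d) = cnt p.
Proof.
elim: d => [|d IH] h; first by rewrite addn0.
rewrite addnS /= IH; last by move=> s /andP [h1 h2]; apply: h; rewrite h1 (leq_trans h2) // leq_add2l.
have e1 : y (p + d).+1 = y p by apply: h; rewrite -addnS leq_addr leqnn.
have e2 : y (p + d) = y p by apply: h; rewrite leq_addr addnS leqnSn.
by rewrite e1 e2 eqxx addn0.
Qed.

Lemma lastch t : exists p, [/\ (p <= t)%N, isch p, cnt p = cnt t &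
  forall s, (p <= s <= t)%N -> y s = y p].
Proof.
elim: t => [|t [p [h1 h2 h3 h4]]].
  exists 0%N; split => //. move=> s /andP [_]. by rewrite leqn0 => /eqP ->.
case E: (y t.+1 != y t).
  exists t.+1; split => //.
  move=> s /andP [a b]; congr y; apply/eqP; by rewrite eqn_leq a b.
have {}E : y t.+1 = y t by apply/eqP; rewrite -[_ == _]negbK E.
exists p; split => //; first by rewrite (leq_trans h1).
  by rewrite /= E eqxx addn0.
move=> s /andP [a b]; rewrite leq_eqVlt in b; case/orP: b => [/eqP ->|b].
  by rewrite E; apply: h4; rewrite h1 leqnn.
by apply: h4; rewrite a -ltnS.
Qed.

Lemma tau_char k t : is_tau y k t = (cnt t == k) && isch t.
Proof.
elim: k t => [|k IH] t.
  case: t => [|t] //=; rewrite /isch; case: (y t.+1 != y t) => /=; [by rewrite addn1 | by rewrite andbF].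
apply/existsP/andP.
  case=> p /andP [/andP [hp hyp] hall].
  change (is_true (is_tau y k p)) in hp; move: hp; rewrite IH => /andP [/eqP cp ip].
  case: t p hyp hall cp ip => [[//]|t] p hyp hall cp ip.
  have hc : forall s, (p <= s <= p + (t - p))%N -> y s = y p.
    move=> s /andP [a b]; rewrite subnKC in b; last by rewrite -ltnS.
    rewrite leq_eqVlt in a; case/orP: a => [/eqP -> //|a].
    have hs : (s < t.+1)%N by rewrite ltnS.
    by move/forallP: hall => /(_ (Ordinal hs)) /=; rewrite a => /eqP.
  have := const_cnt hc; rewrite subnKC; last by rewrite -ltnS.
  have yt : y t = y p.
    by apply: hc; rewrite subnKC ?leqnn ?andbT; rewrite -ltnS.
  move=> ct; rewrite /= ct cp yt hyp; split => //.
  by rewrite addn1.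
case=> /eqP ct it.
case: t ct it => [//|t] /= ct it.
rewrite it addn1 in ct; case: ct => ct.
have [p [h1 h2 h3 h4]] := lastch t.
have hp : (p < t.+1)%N by rewrite ltnS.
exists (Ordinal hp) => /=.
have hk : is_tau y k p by rewrite IH h3 ct eqxx h2.
have ypt : y p = y t by symmetry; apply: h4; rewrite h1 leqnn.
apply/andP; split; first (apply/andP; split); first exact: hk.
  by rewrite ypt.
apply/forallP => s; apply/implyP => ps.
apply/eqP; apply: h4; by rewrite (ltnW ps) -ltnS ltn_ord.
Qed.

End Cnt.



Section Ind.
Variable R : realType.
Variable n : nat.
Variable Splus : {set 'I_n}.
Variables (m : nat -> R) (j : nat -> 'I_n).

Definition mt (y : int) (i : 'I_n) k := (Mval R Splus y i == m k) && (i == j k).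
Definition good (y : nat -> int) (ph : nat -> 'I_n) N :=
  [forall s : 'I_N.+1, isch y s ==> mt (y s) (ph s) (cnt y s)].

Lemma ind_char (y : nat -> int) (ph : nat -> 'I_n) (K' N : nat) :
  is_tau y K' N && [forall k : 'I_K'.+1, forall t : 'I_N.+1, is_tau y k t ==>
     ((Mval R Splus (y t) (ph t) == m k) && (ph t == j k))]
  = (cnt y N == K') && isch y N && good y ph N.
Proof.
rewrite tau_char; case h: ((cnt y N == K') && isch y N) => //=.
move/andP: h => [/eqP cN iN].
apply/forallP/forallP.
  move=> H s; apply/implyP => iss.
  have hk : (cnt y s < K'.+1)%N by rewrite ltnS -cN cnt_mono // -ltnS.
  move: (H (Ordinal hk)) => /forallP /(_ s) /implyP; apply.
  by rewrite tau_char /= eqxx iss.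
move=> H k; apply/forallP => t; apply/implyP; rewrite tau_char => /andP [/eqP ct it].
by move: (H t) => /implyP /(_ it); rewrite /mt ct.
Qed.

Lemma cnt_eq (y y' : nat -> int) N : (forall t, (t <= N)%N -> y t = y' t) ->
  forall t, (t <= N)%N -> cnt y t = cnt y' t.
Proof.
move=> h; elim=> [//|t IH] ht /=.
by rewrite IH ?(ltnW ht) // !h // ltnW.
Qed.

Lemma isch_eq (y y' : nat -> int) N : (forall t, (t <= N)%N -> y t = y' t) ->
  forall t, (t <= N)%N -> isch y t = isch y' t.
Proof. by move=> h [|t] ht //=; rewrite /isch !h // ltnW. Qed.

Lemma good_eq (y y' : nat -> int) (ph ph' : nat -> 'I_n) N :
  (forall t, (t <= N)%N -> y t = y' t) ->
  (forall t, (t <= N)%N -> ph t = ph' t) -> good y ph N = good y' ph' N.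
Proof.
move=> hy hp; apply: eq_forallb => s.
have hs : (s <= N)%N by rewrite -ltnS.
by rewrite (isch_eq hy) // hy // hp // (cnt_eq hy).
Qed.

Lemma good_rec (y : nat -> int) (ph : nat -> 'I_n) N : good y ph N.+1 =
  good y ph N && (isch y N.+1 ==> mt (y N.+1) (ph N.+1) (cnt y N.+1)).
Proof.
apply/forallP/andP.
  move=> H; split; last by move: (H ord_max).
  apply/forallP => s; have hs : (s < N.+2)%N by rewrite ltnS ltnW.
  by move: (H (Ordinal hs)).
case=> /forallP H1 H2 s.
case: (ltnP s N.+1) => hs; first by move: (H1 (Ordinal hs)).
have -> : nat_of_ord s = N.+1 by apply/eqP; rewrite eqn_leq hs -ltnS ltn_ord.
exact: H2.
Qed.

Definition Yof k := if j k \in Splus then m k + 2^-1 else m k - 2^-1.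
Definition MvalR (x : R) (i : 'I_n) := if i \in Splus then x - 2^-1 else x + 2^-1.
Definition mtR (x : R) i k := (MvalR x i == m k) && (i == j k).

Lemma mt_R y i k : mt y i k = mtR y%:~R i k.
Proof. by []. Qed.

Lemma mtR_Y x i k : mtR x i k -> x = Yof k.
Proof.
rewrite /mtR /MvalR /Yof => /andP [/eqP h /eqP hi]; rewrite hi in h.
by case: (j k \in Splus) h => <-; rewrite ?subrK ?addrK.
Qed.

Lemma level_inv (y : nat -> int) (ph : nat -> 'I_n) N :
  good y ph N -> (y N)%:~R = Yof (cnt y N).
Proof.
move=> /forallP g.
have [p [h1 h2 h3 h4]] := lastch y N.
have hp : (p < N.+1)%N by rewrite ltnS.
move: (g (Ordinal hp)) => /= /implyP /(_ h2).
rewrite mt_R h3 => /mtR_Y <-.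
by rewrite (h4 N) // h1 leqnn.
Qed.

End Ind.



Section Ext.
Variable R : realType.
Variable n : nat.
Local Notation A := ('I_3 * 'I_n)%type.

Definition ext N (w : {ffun 'I_N -> A}) (a : A) : {ffun 'I_N.+1 -> A} :=
  [ffun s : 'I_N.+1 => match (insub (val s) : option 'I_N) with Some s' => w s' | None => a end].
Definition res N (w : {ffun 'I_N.+1 -> A}) : {ffun 'I_N -> A} :=
  [ffun s => w (widen_ord (leqnSn N) s)].

Lemma ext_widen N w a (s : 'I_N) : ext w a (widen_ord (leqnSn N) s) = w s.
Proof. rewrite ffunE /=. case: insubP => [s1 _ v1|]; last by rewrite /= ltn_ord. by congr (w _); apply: val_inj. Qed.

Lemma ext_max N w a : @ext N w a ord_max = a.
Proof. by rewrite ffunE insubF // ltnn. Qed.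

Lemma sum_ext N (F : {ffun 'I_N.+1 -> A} -> R) :
  \sum_w F w = \sum_(w : {ffun 'I_N -> A}) \sum_(a : A) F (ext w a).
Proof.
rewrite pair_big /=.
rewrite (reindex (fun p : {ffun 'I_N -> A} * A => ext p.1 p.2)) //=.
exists (fun w => (res w, w ord_max)) => [[w a] _ | w _] /=.
  congr pair; last exact: ext_max.
  by apply/ffunP => s; rewrite ffunE ext_widen.
apply/ffunP => s; rewrite ffunE.
case: insubP => [s' hs vs|hs].
  by rewrite ffunE; congr (w _); apply: val_inj.
have -> : s = ord_max by apply: val_inj => /=; apply/eqP; rewrite eqn_leq -ltnS ltn_ord leqNgt hs.
by [].
Qed.

Lemma path_level_ext N y0 w a t :
  path_level y0 (@ext N w a) t = path_level y0 w t + (if (N < t)%N then ((a.1 : nat)%:Z - 1) else 0).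
Proof.
rewrite /path_level big_mkcond big_ord_recr /= ext_max -addrA; congr (_ + _).
rewrite [in RHS]big_mkcond /=; congr (_ + _).
by apply: eq_bigr => s _; rewrite ext_widen.
Qed.

Lemma path_level_ge N y0 (w : {ffun 'I_N -> A}) t : (N <= t)%N ->
  path_level y0 w t = path_level y0 w N.
Proof.
move=> h; rewrite /path_level; congr (_ + _); apply: eq_bigl => s.
by rewrite ltn_ord (leq_trans (ltn_ord s) h).
Qed.

Lemma ext_val N w a (s : 'I_N.+1) (s' : 'I_N) : val s = val s' -> @ext N w a s = w s'.
Proof.
move=> e; rewrite ffunE; case: insubP => [s1 _ v1|]; last by rewrite e ltn_ord.
by congr (w _); apply: val_inj; rewrite v1 e.
Qed.

Lemma ext_valN N w a (s : 'I_N.+1) : val s = N -> @ext N w a s = a.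
Proof. by move=> e; rewrite ffunE insubF // e ltnn. Qed.

Lemma path_phase_ext N i0 w a t :
  path_phase i0 (@ext N w a) t = if t == N.+1 then a.2 else path_phase i0 w t.
Proof.
case: t => [|t] //=; rewrite eqSS.
case: insubP => [s hs vs|hs]; case: insubP => [s' hs' vs'|hs'] //=.
- by rewrite (ltn_eqF hs') (ext_val _ _ (etrans vs (esym vs'))).
- have e : t = N by apply/eqP; rewrite eqn_leq -ltnS hs leqNgt hs'.
  by rewrite e eqxx ext_valN // vs.
- by move: hs; rewrite ltnS ltnW.
- have e : (t == N) = false by apply/negbTE; apply: contra hs => /eqP ->.
  by rewrite e.
Qed.

Lemma path_prob_ext (Lm L0 Lp : 'M[R]_n) N y0 i0 w a :
  path_prob Lm L0 Lp y0 i0 (@ext N w a) = path_prob Lm L0 Lp y0 i0 w *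
   qbd_tr Lm L0 Lp (path_level y0 w N)%:~R (path_phase i0 w N)
     (path_level y0 w N + ((a.1 : nat)%:Z - 1))%:~R a.2.
Proof.
rewrite /path_prob big_ord_recr; congr (_ * _).
  apply: eq_bigr => t _.
  have ht := ltn_ord t.
  have h1 : (N < t)%N = false by rewrite ltnNge (ltnW ht).
  have h2 : (N < t.+1)%N = false by rewrite ltnNge ht.
  have h3 : (nat_of_ord t == N.+1) = false by rewrite ltn_eqF // ltnW.
  have h4 : (t.+1 == N.+1) = false by rewrite eqSS ltn_eqF.
  by rewrite !path_level_ext !path_phase_ext /= h1 h2 h3 h4 !addr0.
rewrite !path_level_ext !path_phase_ext /= ltnn ltnSn eqxx addr0.
rewrite (path_level_ge y0 w (leqnSn N)).
by rewrite (ltn_eqF (ltnSn N)).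
Qed.

End Ext.



Section Rec.
Variable R : realType.
Variable n : nat.
Variable Splus : {set 'I_n}.
Variables (m : nat -> R) (j : nat -> 'I_n) (i0 : 'I_n).
Variables (Cm C0 Cp : 'M[R]_n).
Local Notation A := ('I_3 * 'I_n)%type.

Lemma andR (a b : bool) : ((a && b)%:R : R) = a%:R * b%:R.
Proof. by case: a; case: b; rewrite ?mulr1 ?mulr0. Qed.

Lemma sum_delta (x : 'I_n) (F : 'I_n -> R) : \sum_i (x == i)%:R * F i = F x.
Proof.
rewrite (bigD1 x) //= eqxx mul1r big1 ?addr0 // => i hi.
by rewrite eq_sym (negbTE hi) mul0r.
Qed.

Lemma sum_A (F : nat -> 'I_n -> R) :
  \sum_(a : A) F (a.1 : nat) a.2 = \sum_i (F 0%N i + F 1%N i + F 2%N i).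
Proof.
rewrite -(pair_bigA _ (fun (d : 'I_3) i => F (d : nat) i)) /=.
rewrite !big_ord_recl big_ord0 addr0 -!big_split /=; apply: eq_bigr => i _; by rewrite /bump /= addrA.
Qed.

Lemma eq_add_int (y z : int) : (y + z == y) = (z == 0).
Proof. by rewrite -subr_eq0 addrAC subrr add0r. Qed.

Definition yW N (w : {ffun 'I_N -> A}) : nat -> int := path_level 1 w.
Definition pW N (w : {ffun 'I_N -> A}) : nat -> 'I_n := path_phase i0 w.
Definition PW N (w : {ffun 'I_N -> A}) := path_prob Cm C0 Cp 1 i0 w.
Definition ev N (w : {ffun 'I_N -> A}) k :=
  (cnt (yW w) N == k) && good Splus m j (yW w) (pW w) N.
Definition u N k i := \sum_(w : {ffun 'I_N -> A}) PW w * ((pW w N == i) && ev w k)%:R.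
Definition e N k i := \sum_(w : {ffun 'I_N -> A})
   PW w * ((pW w N == i) && isch (yW w) N && ev w k)%:R.
Definition stepmat (d : nat) := if d == 0%N then Cm else if d == 1%N then C0 else Cp.
Lemma stepmat0 : stepmat 0 = Cm. Proof. by []. Qed.
Lemma stepmat1 : stepmat 1 = C0. Proof. by []. Qed.
Lemma stepmat2 : stepmat 2 = Cp. Proof. by []. Qed.

Lemma qbd_step (x : R) i (d : 'I_3) k :
  qbd_tr Cm C0 Cp x i (x + ((d : nat)%:Z - 1)%:~R) k = stepmat d i k.
Proof.
rewrite /qbd_tr /stepmat; case: d => [[|[|[|d]]] hd] //=.
- have -> : (((0%N : int) - 1)%:~R : R) = -1 by [].
  have -> : (x + -1 == x + 1) = false by apply/eqP => h; lra.
  have -> : (x + -1 == x) = false by apply/eqP => h; lra.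
  by rewrite eqxx.
- have -> : (((1%N : int) - 1)%:~R : R) = 0 by rewrite subrr.
  have -> : (x + 0 == x + 1) = false by apply/eqP => h; lra.
  by rewrite addr0 eqxx.
- have -> : (((2%N : int) - 1)%:~R : R) = 1 by [].
  by rewrite eqxx.
Qed.


Lemma trueR : (true%:R : R) = 1. Proof. by []. Qed.
Lemma falseR : (false%:R : R) = 0. Proof. by []. Qed.
Lemma c1 : (((1%N : int) - 1)%:~R : R) = 0. Proof. by rewrite subrr. Qed.
Lemma n01 : ((0%N != 1%N)%:R : R) = 1. Proof. by []. Qed.
Lemma n11 : ((1%N != 1%N)%:R : R) = 0. Proof. by []. Qed.
Lemma n21 : ((2%N != 1%N)%:R : R) = 1. Proof. by []. Qed.
Lemma c0 : (((0%N : int) - 1)%:~R : R) = -1. Proof. by []. Qed.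
Lemma c2 : (((2%N : int) - 1)%:~R : R) = 1. Proof. by []. Qed.

Lemma sum_delta' (x : 'I_n) (F : 'I_n -> R) : \sum_i F i * (i == x)%:R = F x.
Proof. rewrite -[RHS](sum_delta x F); apply: eq_bigr => i _; by rewrite mulrC eq_sym. Qed.

Section ExtFacts.
Variables (N : nat) (w : {ffun 'I_N -> A}) (a : A).

Lemma yW_ext t : (t <= N)%N -> yW (ext w a) t = yW w t.
Proof. by move=> h; rewrite /yW path_level_ext ltnNge h addr0. Qed.

Lemma yW_extS : yW (ext w a) N.+1 = yW w N + ((a.1 : nat)%:Z - 1).
Proof. by rewrite /yW path_level_ext ltnSn (path_level_ge _ _ (leqnSn N)). Qed.

Lemma pW_ext t : (t <= N)%N -> pW (ext w a) t = pW w t.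
Proof.
move=> h; rewrite /pW path_phase_ext.
by have -> : (t == N.+1) = false by rewrite ltn_eqF // ltnS.
Qed.

Lemma pW_extS : pW (ext w a) N.+1 = a.2.
Proof. by rewrite /pW path_phase_ext eqxx. Qed.

Lemma isch_extS : isch (yW (ext w a)) N.+1 = ((a.1 : nat) != 1%N).
Proof. by rewrite /isch yW_extS yW_ext // eq_add_int subr_eq0. Qed.

Lemma cnt_extS : cnt (yW (ext w a)) N.+1 = (cnt (yW w) N + ((a.1 : nat) != 1%N))%N.
Proof.
rewrite /= (@cnt_eq _ _ N (fun t ht => yW_ext ht) N (leqnn N)).
by move: isch_extS; rewrite /isch => ->.
Qed.

Lemma good_extS : good Splus m j (yW (ext w a)) (pW (ext w a)) N.+1 =
  good Splus m j (yW w) (pW w) N && (((a.1 : nat) != 1%N) ==>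
    mt Splus m j (yW w N + ((a.1 : nat)%:Z - 1)) a.2 (cnt (yW w) N).+1).
Proof.
rewrite good_rec isch_extS cnt_extS yW_extS pW_extS.
rewrite (good_eq Splus m j (fun t ht => yW_ext ht) (fun t ht => pW_ext ht)).
by case: ((a.1 : nat) != 1%N); rewrite ?addn1.
Qed.

Lemma PW_ext : PW (ext w a) = PW w * stepmat a.1 (pW w N) a.2.
Proof. by rewrite /PW path_prob_ext intrD qbd_step. Qed.

End ExtFacts.

Lemma sum_noch N k i' :
  \sum_(w : {ffun 'I_N.+1 -> A})
     PW w * ((pW w N.+1 == i') && ~~ isch (yW w) N.+1 && ev w k)%:R
  = \sum_i u N k i * C0 i i'.
Proof.
rewrite sum_ext.
transitivity (\sum_(w : {ffun 'I_N -> A}) PW w * C0 (pW w N) i' * (ev w k)%:R).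
  apply: eq_bigr => w _.
  set G := fun (d : nat) (i : 'I_n) =>
     PW w * ((d == 1%N)%:R * (stepmat d (pW w N) i * (i == i')%:R * (ev w k)%:R)).
  rewrite (eq_bigr (fun a : A => G (a.1 : nat) a.2)); last first.
    move=> a _; rewrite /G PW_ext pW_extS isch_extS /ev cnt_extS good_extS /=.
    have [h1|h1] := eqVneq (a.1 : nat) 1%N.
      by rewrite h1 /= addn0 andbT !andR trueR; ring.
    by rewrite /= ?andbF /= falseR; ring.
  rewrite sum_A /G /= /stepmat /=.
  under eq_bigr do rewrite !mul0r !mulr0 !add0r addr0 mul1r.
  apply: (etrans _ (sum_delta' i' (fun i => PW w * C0 (pW w N) i * (ev w k)%:R))).
  by apply: eq_bigr => i _; ring.
transitivity (\sum_(w : {ffun 'I_N -> A}) \sum_i (pW w N == i)%:R * (PW w * C0 i i' * (ev w k)%:R)).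
  by apply: eq_bigr => w _; rewrite sum_delta.
rewrite exchange_big; apply: eq_bigr => i _; rewrite /u mulr_suml.
by apply: eq_bigr => w _; rewrite andR; ring.
Qed.

Lemma u_rec N k i' : u N.+1 k i' = \sum_i u N k i * C0 i i' + e N.+1 k i'.
Proof.
rewrite -sum_noch /u /e -big_split /=; apply: eq_bigr => w _.
rewrite -mulrDr; congr (_ * _).
by case: (pW w N.+1 == i'); case: (ev w k); rewrite /isch; case: (yW w N.+1 != yW w N); rewrite /= ?falseR ?trueR ?add0r ?addr0.
Qed.

Definition X k i i' :=
  Cp i i' * (mtR Splus m j (Yof Splus m j k + 1) i' k.+1)%:R +
  Cm i i' * (mtR Splus m j (Yof Splus m j k - 1) i' k.+1)%:R.

Lemma e_rec N k i' : e N.+1 k.+1 i' = \sum_i u N k i * X k i i'.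
Proof.
rewrite /e sum_ext.
transitivity (\sum_(w : {ffun 'I_N -> A}) PW w * X k (pW w N) i' * (ev w k)%:R).
  apply: eq_bigr => w _.
  set G := fun (d : nat) (i : 'I_n) =>
     PW w * ((d != 1%N)%:R * (stepmat d (pW w N) i * (i == i')%:R * (ev w k)%:R *
        (mtR Splus m j (Yof Splus m j k + ((d%:Z - 1)%:~R)) i k.+1)%:R)).
  rewrite (eq_bigr (fun a : A => G (a.1 : nat) a.2)); last first.
    move=> a _; rewrite /G PW_ext pW_extS isch_extS /ev cnt_extS good_extS.
    have [h1|h1] := eqVneq (a.1 : nat) 1%N.
      by rewrite h1 /= ?andbF /= falseR; ring.
    rewrite /= addn1 eqSS /=.
    have [hc|hc] := eqVneq (cnt (yW w) N) k; last by rewrite /= ?andbF ?andFb /= ?falseR; ring.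
    case Eg: (good Splus m j (yW w) (pW w) N); last by rewrite /= ?andbF ?andFb /= ?falseR; ring.
    have L := level_inv Eg; rewrite hc in L.
    rewrite mt_R intrD L hc.
    by rewrite !andbT !andR trueR; ring.
  rewrite sum_A /G; cbv beta.
  rewrite /X.
  apply: (etrans _ (sum_delta' i' (fun i => PW w * (Cp (pW w N) i * (mtR Splus m j (Yof Splus m j k + 1) i k.+1)%:R + Cm (pW w N) i * (mtR Splus m j (Yof Splus m j k - 1) i k.+1)%:R) * (ev w k)%:R))).
  apply: eq_bigr => i _; cbv beta.
  rewrite ?stepmat0 ?stepmat1 ?stepmat2 ?n01 ?n11 ?n21 ?c0 ?c1 ?c2.
  by ring.
transitivity (\sum_(w : {ffun 'I_N -> A}) \sum_i (pW w N == i)%:R * (PW w * X k i i' * (ev w k)%:R)).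
  by apply: eq_bigr => w _; rewrite sum_delta.
rewrite exchange_big; apply: eq_bigr => i _; rewrite /u mulr_suml.
by apply: eq_bigr => w _; rewrite andR; ring.
Qed.

Lemma e_rec0 N i' : e N.+1 0 i' = 0.
Proof.
apply: big1 => w _; rewrite /ev /= /isch.
by case: (yW w N.+1 != yW w N); rewrite ?addn1 ?andbF ?mulr0.
Qed.

Lemma sum_ffun0 (F : {ffun 'I_0 -> A} -> R) : \sum_w F w = F [ffun=> (ord0, i0)].
Proof.
rewrite (big_pred1 [ffun=> (ord0, i0)]) // => w /=.
by apply/esym/eqP/ffunP => -[].
Qed.

Lemma good0 y ph : good Splus m j y ph 0 = mt Splus m j (y 0%N) (ph 0%N) 0.
Proof.
apply/forallP/idP => [H | H s]; first exact: (H ord0).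
by rewrite (ord1 s); apply/implyP => _; exact: H.
Qed.

Lemma u0 k i : u 0 k i = ((i0 == i) && (k == 0%N) && mt Splus m j 1 i0 0)%:R.
Proof.
rewrite /u sum_ffun0 /PW /path_prob big_ord0 mul1r /ev good0 /yW /pW /=.
rewrite /path_level big_mkcond big_ord0 addr0 /=.
by rewrite andbA (eq_sym 0%N k).
Qed.

Lemma e0 k i : e 0 k i = u 0 k i.
Proof. by rewrite /e /u; apply: eq_bigr => w _; rewrite andbT. Qed.

End Rec.



Section Gen.
Variable R : realType.
Variable n : nat.
Variable T : 'M[R]_n.
Hypothesis Tgen : is_generator T.

Lemma keyineq (x p q : R) : 0 < p -> 0 < q -> x <= 0 -> - q <= x -> x / p - x / q < 1.
Proof.
move=> p0 q0 x0 xq.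
have h2 : 0 <= (q + x) / q by apply: mulr_ge0; [lra | rewrite invr_ge0 ltW].
rewrite mulrDl mulfV ?gt_eqF // in h2.
case: (ltgtP x 0) x0 => // [xl|->] _; last by rewrite !mul0r subr0.
have h1 : x / p < 0 by rewrite pmulr_llt0 // invr_gt0.
lra.
Qed.

Lemma Pmat_ge0 c : 0 < c -> (forall i, `|T i i| <= c) -> forall i k, 0 <= Pmat c T i k.
Proof.
move=> c0 Tc i k; rewrite /Pmat !mxE.
have [<-|nik] := eqVneq i k.
  have : - c <= T i i by move: (Tc i); rewrite ler_norml => /andP [].
  move=> h.
  have h' : 0 <= c^-1 * (c + T i i) by apply: mulr_ge0; [rewrite invr_ge0 ltW | lra].
  by rewrite mulrDr mulVf ?gt_eqF // in h'.
rewrite mulr0n add0r; apply: mulr_ge0; first by rewrite invr_ge0 ltW.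
by case: Tgen => Toff _; apply: Toff.
Qed.

Lemma sum_ind_delta (P : pred 'I_n) i : \sum_(k | P k) ((i == k)%:R : R) = (P i)%:R.
Proof.
rewrite big_mkcond (bigD1 i) //= eqxx big1 ?addr0; first by case: (P i).
by move=> k /negbTE; rewrite eq_sym => ->; case: (P k).
Qed.

Lemma sum_Pmat (P : pred 'I_n) c i :
  \sum_(k | P k) Pmat c T i k = (P i)%:R + c^-1 * \sum_(k | P k) T i k.
Proof.
rewrite /Pmat; under eq_bigr do rewrite !mxE.
by rewrite big_split /= sum_ind_delta mulr_sumr.
Qed.

Lemma Pmat_row c i : \sum_k Pmat c T i k = 1.
Proof.
have := sum_Pmat xpredT c i; rewrite /= => ->.
by case: Tgen => _ ->; rewrite mulr0 addr0.
Qed.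

Variable S : {set 'I_n}.

Lemma rho_lt1 lam mu : 0 < lam -> 0 < mu ->
  (forall i, `|T i i| <= lam) -> (forall i, `|T i i| <= mu) ->
  forall i, \sum_k (if k \in S then 2^-1 * Pmat mu T i k else 2^-1 * Pmat lam T i k) < 1.
Proof.
move=> l0 m0 Tl Tm i.
case: Tgen => Toff Trow.
rewrite (bigID (fun k => k \in S)) /=.
rewrite (eq_bigr (fun k => 2^-1 * Pmat mu T i k)); last by move=> k ->.
rewrite [X in _ + X](eq_bigr (fun k => 2^-1 * Pmat lam T i k)); last by move=> k /negbTE ->.
rewrite -!mulr_sumr !sum_Pmat.
set a := \sum_(k | k \in S) T i k.
set b := \sum_(k | k \notin S) T i k.
have hab : a + b = 0.
  by have := Trow i; rewrite (bigID (fun k => k \in S)) /=.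
have hb : b = - a by lra.
rewrite hb.
have -Tii : - lam <= T i i /\ - mu <= T i i.
  by move: (Tl i) (Tm i); rewrite !ler_norml => /andP [h1 _] /andP [h2 _].
case: Tii => Tii1 Tii2.
case iS: (i \in S) => /=.
  have a0 : a <= 0.
    suff : 0 <= b by lra.
    apply: sumr_ge0 => k kS; apply: Toff; apply/eqP => ik; move: kS; by rewrite -ik iS.
  have aT : T i i <= a.
    rewrite /a (bigD1 i) //= lerDl; apply: sumr_ge0 => k /andP [_ ki].
    by apply: Toff; rewrite eq_sym.
  have := keyineq m0 l0 a0 (le_trans Tii1 aT).
  set x1 := a / mu; set x2 := a / lam.
  have -> : mu^-1 * a = x1 by rewrite /x1 mulrC.
  have -> : lam^-1 * - a = - x2 by rewrite /x2 mulrN mulrC.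
  move=> h; lra.
have b0 : - a <= 0.
  suff : 0 <= a by lra.
  apply: sumr_ge0 => k kS; apply: Toff; apply/eqP => ik; move: kS; by rewrite -ik iS.
have bT : T i i <= - a.
  rewrite -hb /b (bigD1 i) ?iS //= lerDl; apply: sumr_ge0 => k /andP [_ ki].
  by apply: Toff; rewrite eq_sym.
have := keyineq l0 m0 b0 (le_trans Tii2 bT).
set x1 := - a / lam; set x2 := - a / mu.
have -> : mu^-1 * a = - x2 by rewrite /x2 mulNr opprK mulrC.
have -> : lam^-1 * - a = x1 by rewrite /x1 mulrC.
move=> h; lra.
Qed.

End Gen.

Module AnalM.
Local Open Scope classical_set_scope.


Lemma sumcvg (R : realType) (I : finType) (f : I -> nat -> R) (a : I -> R) :
  (forall i, f i @ \oo --> a i) ->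
  (fun n => \sum_i f i n) @ \oo --> \sum_i a i.
Proof. move=> h; apply: cvg_big => //; exact: add_continuous. Qed.

Section Anal.
Variable R : realType.
Variable n : nat.
Variable C0 : 'M[R]_n.
Variable r : R.
Hypothesis C0ge0 : forall i j, 0 <= C0 i j.
Hypothesis rowC0 : forall i, \sum_j C0 i j <= r.
Hypothesis r1 : r < 1.
Hypothesis Cunit : (1%:M - C0) \in unitmx.

Definition PS (f : nat -> R) M := \sum_(0 <= N < M) f N.

Lemma PS_S f M : PS f M.+1 = f 0%N + PS (fun N => f N.+1) M.
Proof. by rewrite /PS big_nat_recl. Qed.

Lemma PS_nd f : (forall N, 0 <= f N) -> nondecreasing_seq (PS f).
Proof. by move=> h; apply/nondecreasing_seqP => M; rewrite /PS big_nat_recr //= lerDl. Qed.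

Lemma PS_le f L : (forall N, 0 <= f N) -> PS f @ \oo --> L -> forall M, PS f M <= L.
Proof.
move=> h c M; rewrite -(cvg_lim _ c) //; apply: nondecreasing_cvgn_le => //.
  exact: PS_nd.
exact: cvgP c.
Qed.

Lemma neumann (u e : nat -> 'I_n -> R) (E : 'I_n -> R) :
  (forall N i, 0 <= u N i) -> (forall N i, 0 <= e N i) ->
  (forall i, u 0%N i = e 0%N i) ->
  (forall N i', u N.+1 i' = \sum_i u N i * C0 i i' + e N.+1 i') ->
  (forall i, PS (e ^~ i) @ \oo --> E i) ->
  forall i', PS (u ^~ i') @ \oo --> \sum_l E l * invmx (1%:M - C0) l i'.
Proof.
move=> u0 e0 ue urec cE.
have PSrec M i' : PS (u^~ i') M.+1 = \sum_i PS (u^~ i) M * C0 i i' + PS (e^~ i') M.+1.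
  rewrite !PS_S ue addrCA; congr (_ + _).
  rewrite /PS; under eq_bigr do rewrite urec.
  rewrite big_split /=; congr (_ + _).
  rewrite exchange_big /=; apply: eq_bigr => i _; by rewrite mulr_suml.
have nd i : nondecreasing_seq (PS (u^~ i)) by apply: PS_nd.
have PSge0 i M : 0 <= PS (u^~ i) M by apply: sumr_ge0.
set B := \sum_i E i.
have PEle i M : PS (e^~ i) M <= E i by apply: PS_le.
have sig M : \sum_i PS (u^~ i) M <= B / (1 - r).
  have h1 : \sum_i PS (u^~ i) M <= \sum_i PS (u^~ i) M.+1.
    by apply: ler_sum => i _; apply: nd.
  have h2 : \sum_i PS (u^~ i) M.+1 <= r * \sum_i PS (u^~ i) M + B.
    rewrite (eq_bigr _ (fun i _ => PSrec M i)) big_split /=; apply: lerD; last first.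
      by apply: ler_sum => i _; apply: PEle.
    rewrite exchange_big /= mulr_sumr; apply: ler_sum => i _.
    rewrite -mulr_sumr mulrC; apply: ler_wpM2r => //.
  rewrite ler_pdivlMr ?subr_gt0 //.
  set s := \sum_i PS (u^~ i) M in h1 h2 *.
  nra.
have bnd i M : PS (u^~ i) M <= B / (1 - r).
  apply: le_trans (sig M); rewrite (bigD1 i) //= lerDl; exact: sumr_ge0.
have cv i : cvgn (PS (u^~ i)).
  apply: nondecreasing_is_cvgn => //; exists (B / (1 - r)) => _ [M _ <-]; exact: bnd.
set U := fun i => limn (PS (u^~ i)).
have Ueq i' : U i' = \sum_i U i * C0 i i' + E i'.
  have c1 : (fun M => PS (u^~ i') M.+1) @ \oo --> U i'.
    by rewrite cvg_shiftS; exact: cv.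
  have c2 : (fun M => \sum_i PS (u^~ i) M * C0 i i' + PS (e^~ i') M.+1) @ \oo -->
     \sum_i U i * C0 i i' + E i'.
    apply: cvgD; first by apply: sumcvg => i; apply: cvgMr_tmp; exact: cv.
    by rewrite (cvg_shiftS (fun M => PS (e^~ i') M)); exact: cE.
  rewrite -(cvg_lim _ c1) // -(cvg_lim _ c2) //; congr (limn _).
  by apply/funext => M; rewrite PSrec.
pose uv := \row_i U i; pose Ev := \row_i E i.
have huv : uv *m (1%:M - C0) = Ev.
  apply/rowP => i'; rewrite mulmxBr mulmx1 !mxE.
  under eq_bigr do rewrite mxE.
  by rewrite Ueq addrAC subrr add0r.
have huv2 : uv = Ev *m invmx (1%:M - C0) by rewrite -huv -mulmxA mulmxV // mulmx1.
move=> i'; suff -> : \sum_l E l * invmx (1%:M - C0) l i' = U i' by exact: cv.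
have := congr1 (fun M : 'rV[R]_n => M 0 i') huv2; rewrite !mxE => ->.
by apply: eq_bigr => l _; rewrite mxE.
Qed.

Lemma stepcvg (u e' : nat -> 'I_n -> R) (X : 'I_n -> 'I_n -> R) (U : 'I_n -> R) :
  (forall i, e' 0%N i = 0) -> (forall N i', e' N.+1 i' = \sum_i u N i * X i i') ->
  (forall i, PS (u^~ i) @ \oo --> U i) ->
  forall i', PS (e'^~ i') @ \oo --> \sum_i U i * X i i'.
Proof.
move=> h0 hS cU i'.
rewrite -cvg_shiftS.
have -> : (fun M => PS (e'^~ i') M.+1) = (fun M => \sum_i PS (u^~ i) M * X i i').
  apply/funext => M; rewrite PS_S h0 add0r /PS.
  under eq_bigr do rewrite hS.
  rewrite exchange_big /=; apply: eq_bigr => i _; by rewrite mulr_suml.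
by apply: sumcvg => i; apply: cvgMr_tmp; exact: cU.
Qed.

End Anal.

End AnalM.
Import AnalM.


Lemma qbd_form (R : realType) (a b c1 c2 c3 : R) :
  (if b == a + 1 then c1 else if b == a then c2 else if b == a - 1 then c3 else 0) =
  c1 * (b == a + 1)%:R + c2 * (b == a)%:R + c3 * (b == a - 1)%:R.
Proof.
have tR : (true%:R : R) = 1 by [].
have fR : (false%:R : R) = 0 by [].
case: (@eqP _ b (a + 1)) => [e1|n1].
  have f1 : (b == a) = false by apply/eqP; lra.
  have f2 : (b == a - 1) = false by apply/eqP; lra.
  by rewrite f1 f2 /= tR fR mulr1 !mulr0 !addr0.
case: (@eqP _ b a) => [e2|n2].
  have f2 : (b == a - 1) = false by apply/eqP; lra.
  by rewrite f2 /= tR fR mulr1 !mulr0 add0r addr0.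
by case: (@eqP _ b (a - 1)) => [e3|n3]; rewrite /= ?tR fR ?mulr1 !mulr0 ?add0r ?addr0.
Qed.


End Aux.
Import Aux.
Import AnalM.
Import numFieldNormedType.Exports.

Theorem theorem6 (R : realType) (n : nat) (Splus : {set 'I_n}) (T : 'M[R]_n)
    (lam mu : R) (i0 : 'I_n) :
  is_generator T ->
  (Splus != finset.set0) -> (~: Splus != finset.set0) ->
  0 < lam -> 0 < mu ->
  (forall i, `|T i i| <= lam) -> (forall i, `|T i i| <= mu) ->
  i0 \in Splus ->
  let Pl := Pmat lam T in
  let Pm := Pmat mu T in
  let Cm := \matrix_(i, j) (if j \in Splus then 0 else 2^-1 * Pm i j) in
  let C0 := \matrix_(i, j) (if j \in Splus then 2^-1 * Pm i j else 2^-1 * Pl i j) in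
  let Cp := \matrix_(i, j) (if j \in Splus then 2^-1 * Pl i j else 0) in
  let K := invmx (1%:M - C0) *m
           (\matrix_(i, j) (if j \in Splus then 2^-1 * Pl i j else 2^-1 * Pm i j)) in
  let A' := \matrix_(i, j) ((i == j)%:R -
              (if j \in Splus then mu^-1 else lam^-1) * T i j) in
  let B' := \matrix_(i, j) ((i == j)%:R +
              (if j \in Splus then lam^-1 else mu^-1) * T i j) in
  let Dm := \matrix_(i, j) (if (i \notin Splus) && (j \notin Splus) then K i j else 0) in
  let D0 := \matrix_(i, j) (if (i \in Splus) != (j \in Splus) then K i j else 0) in
  let Dp := \matrix_(i, j) (if (i \in Splus) && (j \in Splus) then K i j else 0) in
  [/\ (1%:M - C0) \in unitmx,
      A' \in unitmx,
      K = invmx A' *m B' &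
      forall (K' : nat) (m : nat -> R) (j : nat -> 'I_n),
        (\sum_(0 <= N <oo)
           (\sum_(w : {ffun 'I_N -> 'I_3 * 'I_n})
              path_prob Cm C0 Cp 1 i0 w *
              ((is_tau (path_level 1 w) K' N &&
                [forall k : 'I_K'.+1, forall t : 'I_N.+1,
                   is_tau (path_level 1 w) k t ==>
                   ((Mval R Splus (path_level 1 w t) (path_phase i0 w t) == m k) &&
                    (path_phase i0 w t == j k))]))%:R)%:E)%E
        = (((m 0%N == 2^-1) && (j 0%N == i0))%:R *
           \prod_(k < K') qbd_tr Dm D0 Dp (m k) (j k) (m k.+1) (j k.+1))%:E ].
Proof.
move=> Tgen Sne Scne lam0 mu0 Tl Tm i0S Pl Pm Cm C0 Cp K A' B' Dm D0 Dp.
have Plge0 := Pmat_ge0 Tgen lam0 Tl.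
have Pmge0 := Pmat_ge0 Tgen mu0 Tm.
have h2 : (0 : R) <= 2^-1 by rewrite invr_ge0 ler0n.
have C0ge0 i k : 0 <= C0 i k.
  by rewrite /C0 mxE; case: (k \in Splus); apply: mulr_ge0.
have Cmge0 i k : 0 <= Cm i k.
  by rewrite /Cm mxE; case: (k \in Splus) => //; apply: mulr_ge0.
have Cpge0 i k : 0 <= Cp i k.
  by rewrite /Cp mxE; case: (k \in Splus) => //; apply: mulr_ge0.
pose rho i := \sum_k C0 i k.
have rholt i : rho i < 1.
  rewrite /rho /C0; under eq_bigr do rewrite mxE.
  exact: (rho_lt1 Tgen Splus lam0 mu0 Tl Tm).
pose r := \big[Order.max/0]_i rho i.
have rhor i : rho i <= r by apply: le_bigmax.
have r1 : r < 1 by apply/bigmax_ltP; split => //; exact: ltr01.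
have Cunit : (1%:M - C0) \in unitmx.
  rewrite unitmxE unitfE; apply/negP => /det0P [v vnz hv].
  have hv2 : v *m C0 = v.
    by move/eqP: hv; rewrite mulmxBr mulmx1 subr_eq0 => /eqP <-.
  pose a := \sum_i `|v 0 i|.
  have ha : a <= r * a.
    have h i' : `|v 0 i'| <= \sum_i `|v 0 i| * C0 i i'.
      rewrite -{1}hv2 mxE; apply: le_trans (ler_norm_sum _ _ _) _.
      by apply: ler_sum => i _; rewrite normrM (ger0_norm (C0ge0 i i')).
    apply: le_trans (ler_sum _ (fun i' _ => h i')) _.
    rewrite exchange_big /= /a mulr_sumr; apply: ler_sum => i _.
    by rewrite -mulr_sumr mulrC; apply: ler_wpM2r => //; exact: rhor.
  have a0 : 0 <= a by apply: sumr_ge0 => i _; exact: normr_ge0.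
  have a00 : a = 0 by nra.
  apply: (negP vnz); apply/eqP/rowP => i; rewrite mxE.
  have H := psumr_eq0P (fun k _ => normr_ge0 (v 0 k)) a00; have := @H i isT.
  by move/eqP; rewrite normr_eq0 => /eqP.
have two_unit : (2%:R : R) \is a GRing.unit by rewrite unitfE pnatr_eq0.
have hA : A' = 2%:R *: (1%:M - C0).
  apply/matrixP => i k; rewrite /A' /C0 /Pm /Pl /Pmat !mxE.
  by case: (k \in Splus); lra.
pose Bh := \matrix_(i, j) (if j \in Splus then 2^-1 * Pl i j else 2^-1 * Pm i j).
have hB : B' = 2%:R *: Bh.
  apply/matrixP => i k; rewrite /B' /Bh /Pm /Pl /Pmat !mxE.
  by case: (k \in Splus); lra.
have Aunit : A' \in unitmx by rewrite hA unitmxZ.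
split => //.
  rewrite hA hB invmxZ ?unitmxZ // -scalemxAl -scalemxAr scalerA mulVf ?pnatr_eq0 //.
  by rewrite scale1r.
move=> K' m j.
pose u' := u Splus m j i0 Cm C0 Cp.
pose e' := e Splus m j i0 Cm C0 Cp.
have PWge0 N (w : {ffun 'I_N -> 'I_3 * 'I_n}) : 0 <= path_prob Cm C0 Cp 1 i0 w.
  apply: prodr_ge0 => t _; rewrite /qbd_tr.
  case: ifP => _; first exact: Cpge0.
  case: ifP => _; first exact: C0ge0.
  case: ifP => _; first exact: Cmge0.
  exact: lexx.
have uge0 N k i : 0 <= u' N k i.
  by apply: sumr_ge0 => w _; apply: mulr_ge0 => //; exact: PWge0.
have ege0 N k i : 0 <= e' N k i.
  by apply: sumr_ge0 => w _; apply: mulr_ge0 => //; exact: PWge0.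
pose inv := invmx (1%:M - C0).
pose Xf k := X Splus m j Cm Cp k.
pose fix Ek (k : nat) : 'I_n -> R :=
  if k is k'.+1 then fun i' => \sum_i (\sum_l Ek k' l * inv l i) * Xf k' i i'
  else fun i => e' 0%N 0%N i.
have conv k i : (PS (fun N => e' N k i) @ \oo --> Ek k i)%classic.
  elim: k i => [|k IH] i.
    rewrite -cvg_shiftS.
    have -> : (fun M => PS (fun N => e' N 0%N i) M.+1) = (fun=> e' 0%N 0%N i).
      apply/funext => M; rewrite PS_S /PS big1 ?addr0 // => N _; exact: e_rec0.
    exact: cvg_cst.
  have cU := @neumann R n C0 r rhor r1 Cunit (fun N i => u' N k i) (fun N i => e' N k i)
    (Ek k) (fun N i => uge0 N k i) (fun N i => ege0 N k i)
    (fun i => esym (e0 Splus m j i0 Cm C0 Cp k i)) (fun N i' => u_rec Splus m j i0 Cm C0 Cp N k i') IH.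
  apply: (@stepcvg R n (fun N i => u' N k i) (fun N i => e' N k.+1 i) (Xf k)).
  - move=> i1; rewrite /e' e0 u0 /=; by rewrite andbF.
  - by move=> N i'; exact: e_rec.
  - exact: cU.
pose s k := ((m 0%N == 2^-1) && (j 0%N == i0))%:R *
   \prod_(l < k) qbd_tr Dm D0 Dp (m l) (j l) (m l.+1) (j l.+1).
have Kv a b : K a b = \sum_i inv a i * Bh i b.
  by rewrite /K mxE; apply: eq_bigr => i _; rewrite mxE.
have Xsum k i' : \sum_i inv (j k) i * Xf k i i' =
    (j k.+1 == i')%:R * qbd_tr Dm D0 Dp (m k) (j k) (m k.+1) (j k.+1).
  rewrite /Xf /X /mtR.
  case: (eqVneq (j k.+1) i') => [<-|ne]; last first.
    by rewrite mul0r big1 // => i _; rewrite !andbF !mulr0 addr0 mulr0.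
  rewrite ?eqxx !andbT mul1r.
  set jj := j k.+1.
  set c1 := (MvalR Splus (Yof Splus m j k + 1) jj == m k.+1).
  set c2 := (MvalR Splus (Yof Splus m j k - 1) jj == m k.+1).
  have -> : \sum_i inv (j k) i * (Cp i jj * c1%:R + Cm i jj * c2%:R) =
      K (j k) jj * (if jj \in Splus then c1%:R else c2%:R).
    rewrite Kv mulr_suml; apply: eq_bigr => i _; rewrite /Cp /Cm /Bh !mxE.
    by case: (jj \in Splus); ring.
  rewrite /qbd_tr /Dm /D0 /Dp !mxE qbd_form.
  rewrite /c1 /c2 /Yof /MvalR.
  case hk: (j k \in Splus); case hj: (jj \in Splus) => /=.
  - have -> : m k + 2^-1 + 1 - 2^-1 = m k + 1 by lra.
    by rewrite eq_sym; ring.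
  - have -> : m k + 2^-1 - 1 + 2^-1 = m k by lra.
    by rewrite eq_sym; ring.
  - have -> : m k - 2^-1 + 1 - 2^-1 = m k by lra.
    by rewrite eq_sym; ring.
  - have -> : m k - 2^-1 - 1 + 2^-1 = m k - 1 by lra.
    by rewrite eq_sym; ring.
have Eform k i : Ek k i = (j k == i)%:R * s k.
  elim: k i => [|k IH] i.
    rewrite /= /e' e0 u0 /s big_ord0 mulr1 /mt /Mval i0S.
    have -> : ((1 : int)%:~R - 2^-1 : R) = 2^-1 by rewrite /=; lra.
    rewrite eqxx andbT [2^-1 == m 0%N]eq_sym [i0 == j 0%N]eq_sym.
    case: (eqVneq (j 0%N) i0) => [->|ne]; last by rewrite !andbF mulr0.
    rewrite !andbT; case: (i0 == i); case: (m 0%N == 2^-1); by rewrite /= ?mulr1 ?mulr0.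
  rewrite /=.
  under eq_bigr => i1 _ do under eq_bigr => l _ do rewrite IH -mulrA.
  under eq_bigr => i1 _ do rewrite sum_delta -mulrA.
  rewrite -mulr_sumr Xsum /s big_ord_recr /=; ring.
pose f N := \sum_i e' N K' i.
transitivity (limn (fun M => (PS f M)%:E)).
  apply: (congr1 (fun g : nat -> \bar R => limn g)); apply/funext => M; rewrite sumEFin; congr EFin.
  apply: eq_bigr => N _.
  rewrite /f /e' /e exchange_big /=; apply: eq_bigr => w _.
  rewrite ind_char -mulr_sumr; congr (_ * _).
  rewrite /ev /yW /pW.
  set c := (cnt (path_level 1 w) N == K').
  set b := isch (path_level 1 w) N.
  set g := good Splus m j (path_level 1 w) (path_phase i0 w) N.
  rewrite (eq_bigr (fun i => (path_phase i0 w N == i)%:R * (c && b && g)%:R)); last first.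
    move=> i _; case: (path_phase i0 w N == i); case: c; case: b; case: g;
    by rewrite /= ?mul1r ?mul0r.
  by rewrite -mulr_suml (@sum_ind_delta R n xpredT) mul1r.
have cvf : (PS f @ \oo --> \sum_i Ek K' i)%classic.
  have -> : PS f = (fun M => \sum_i PS (fun N => e' N K' i) M).
    by apply/funext => M; rewrite /PS /f exchange_big.
  by apply: sumcvg => i; exact: conv.
have := EFin_lim (cvgP _ cvf); rewrite /comp => ->.
rewrite (cvg_lim _ cvf) //; congr EFin.
under eq_bigr do rewrite Eform.
by rewrite sum_delta.
Qed.
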